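(* Let $S$ and $R$ be local rings with finite ideals $I_S\subset S$, $I_R\subset R$ such that $S/I_S\cong R/I_R\cong\mathbb Z_p$, and let $S\twoheadrightarrow R$ be a surjection with finite nonzero kernel $J$. Let $\tilde\Phi\subset\mathrm{GL}_2(\mathbb Z_p)$ be a finite subgroup of order prime to $p$ and let $\tilde\Gamma\subset\mathrm{GL}_2(R)$ be its inverse image under $\mathrm{GL}_2(R)\to\mathrm{GL}_2(\mathbb Z_p)$ (so $1\to 1+M_2(I_R)\to\tilde\Gamma\to\tilde\Phi\to1$). If $\Gamma_J\subset[\Gamma_S,\Gamma_S]\Gamma_S^p$, then there is no lift $\tilde\Gamma\to\mathrm{GL}_2(S)$.
   Context: For an ideal $I\subset S$, $\Gamma_I=1+M_2(I)$ and $\Gamma_S=1+M_2(I_S)$. A lift $\tilde\Gamma\to\mathrm{GL}_2(S)$ means a group homomorphism whose composition with $\mathrm{GL}_2(S)\to\mathrm{GL}_2(R)$ is the inclusion $\tilde\Gamma\subset\mathrm{GL}_2(R)$. *)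

(* Defs.v *)
From mathcomp Require Import all_boot all_algebra.
Set Implicit Arguments. Unset Strict Implicit. Unset Printing Implicit Defensive.
Import GRing.Theory.
Local Open Scope ring_scope.

Definition is_ideal (A : comNzRingType) (I : pred A) : Prop :=
  [/\ 0 \in I,
      (forall x y, x \in I -> y \in I -> x + y \in I) &
      (forall a x, x \in I -> a * x \in I)].

Definition finite_pred (T : eqType) (A : pred T) : Prop :=
  exists s : seq T, forall x, x \in A -> x \in s.

(* Local ring: (nonzero ring whose) non-units form an ideal, i.e. are closed
   under addition (closure under multiplication by scalars is automatic). *)
Definition is_local (A : comUnitRingType) : Prop :=
  forall x y : A, x \isn't a GRing.unit -> y \isn't a GRing.unit ->
    x + y \isn't a GRing.unit.

Definition kerp (A B : comUnitRingType) (f : {rmorphism A -> B}) : pred A :=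
  fun x => f x == 0.

(* f : A -> B is surjective with kernel I, i.e. induces A / I ~= B. *)
Definition quotient_map (A B : comUnitRingType) (f : {rmorphism A -> B})
  (I : pred A) : Prop :=
  (forall y : B, exists x : A, f x = y) /\ (forall x, (f x == 0) = (x \in I)).

(* Zp is (isomorphic to) the ring of p-adic integers: the inverse limit of
   the rings Z/p^(n+1) along the reduction maps, via projections pi n. *)
Definition is_padic_integers (p : nat) (Zp : comUnitRingType) : Prop :=
  exists pi : forall n : nat, {rmorphism Zp -> 'Z_(p ^ n.+1)},
    [/\ (forall n (x : Zp), (val (pi n x) = val (pi n.+1 x) %% p ^ n.+1)%N),
        (forall x y : Zp, (forall n, pi n x = pi n y) -> x = y) &
        (forall f : forall n : nat, 'Z_(p ^ n.+1),
           (forall n, (val (f n) = val (f n.+1) %% p ^ n.+1)%N) ->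
           exists x : Zp, forall n, pi n x = f n)].

Definition Gamma (A : comUnitRingType) (I : pred A) : pred 'M[A]_2 :=
  fun g => [forall i, [forall j, (g - 1) i j \in I]].

Inductive gen_group (G : unitRingType) (P : G -> Prop) : G -> Prop :=
| gg_base x : P x -> gen_group P x
| gg_one : gen_group P 1
| gg_mul x y : gen_group P x -> gen_group P y -> gen_group P (x * y)
| gg_inv x : gen_group P x -> gen_group P x^-1.

(* Generators of [Gamma, Gamma] Gamma^p : commutators and p-th powers. *)
Definition comm_pow_gens (G : unitRingType) (p : nat) (Gam : pred G) (g : G)
  : Prop :=
  (exists a b, [/\ a \in Gam, b \in Gam & g = a^-1 * b^-1 * a * b])
  \/ (exists a, a \in Gam /\ g = a ^+ p).

Definition finite_subgroup_GL2 (A : comUnitRingType) (s : seq 'M[A]_2) : Prop :=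
  [/\ uniq s, 1 \in s,
      (forall g, g \in s -> g \is a GRing.unit),
      (forall g h, g \in s -> h \in s -> g * h \in s) &
      (forall g, g \in s -> g^-1 \in s)].

Definition tildeGamma (R Zp : comUnitRingType) (piR : {rmorphism R -> Zp})
  (Phi : seq 'M[Zp]_2) : pred 'M[R]_2 :=
  fun g => (g \is a GRing.unit) && (map_mx piR g \in Phi).

Definition is_lift (S R : comUnitRingType) (phi : {rmorphism S -> R})
  (TG : pred 'M[R]_2) (rho : 'M[R]_2 -> 'M[S]_2) : Prop :=
  (forall g, g \in TG -> rho g \is a GRing.unit /\ map_mx phi (rho g) = g) /\
  (forall g h, g \in TG -> h \in TG -> rho (g * h) = rho g * rho h).

(* Main.v *)
Require Import Defs.
From mathcomp Require Import all_boot all_algebra.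
From Stdlib Require Import Classical ClassicalEpsilon.
Import GRing.Theory.
Local Open Scope ring_scope.
Lemma mapM2 (A B : comUnitRingType) (f : {rmorphism A -> B}) (M N : 'M[A]_2) :
  map_mx f (M * N) = map_mx f M * map_mx f N.
Proof. by rewrite -!mulmxE map_mxM. Qed.

Lemma mapinv2 (A B : comUnitRingType) (f : {rmorphism A -> B}) (M : 'M[A]_2) :
  M \is a GRing.unit -> map_mx f (M^-1) = (map_mx f M)^-1.
Proof.
move=> uM.
have uf : map_mx f M \is a GRing.unit.
  by rewrite unitmxE det_map_mx rmorph_unit // -unitmxE.
apply: (mulIr uf); rewrite -mapM2 !mulVr // -[1]/(1%:M) map_mx1.
by [].
Qed.

Lemma unit_of_morph (S T : comUnitRingType) (f : {rmorphism S -> T})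
  (hS : forall x y : S, x \isn't a GRing.unit -> y \isn't a GRing.unit ->
    x + y \isn't a GRing.unit) (y : S) :
  f y = 1 -> y \is a GRing.unit.
Proof.
move=> fy; apply/negPn/negP => ny.
have n1 : (1 - y) \isn't a GRing.unit.
  apply/negP => u; have := rmorph_unit f u.
  by rewrite rmorphB rmorph1 fy subrr unitr0.
by have := hS _ _ ny n1; rewrite addrC subrK unitr1.
Qed.

Lemma mx_mul_pred (S : comUnitRingType) (P Q Rr : S -> Prop)
  (R0 : Rr 0) (RD : forall x y, Rr x -> Rr y -> Rr (x + y))
  (PQ : forall a b, P a -> Q b -> Rr (a * b)) (A B : 'M[S]_2) :
  (forall i j, P (A i j)) -> (forall i j, Q (B i j)) ->
  forall i j, Rr ((A * B) i j).
Proof.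
move=> hA hB i j; rewrite -mulmxE mxE.
by apply: (big_ind Rr) => // k _; apply: PQ.
Qed.

Lemma addid1 (V : zmodType) (o y a c u : V): o + y + (a + c) - o - a - u = (y - u) + c.
Proof. rewrite [o + y]addrC [y + o + _]addrC addrA addrK addrC -addrA addrA.
by rewrite [a + c]addrC [y + (c + a)]addrA addrK addrAC. Qed.
Lemma addid2 (V : zmodType) (a b c d : V): a + b + (c + d) - a = c + b + d.
Proof. rewrite [a + b + _]addrC [_ + (a + b)]addrA [_ + a + b]addrC.
by rewrite addrA addrK addrA [b + c]addrC. Qed.

Lemma map1' (A B : comUnitRingType) (f : {rmorphism A -> B}) :
  map_mx f (1 : 'M[A]_2) = 1.
Proof. exact: map_mx1. Qed.

Lemma det1' (A : comUnitRingType) : \det (1 : 'M[A]_2) = 1.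
Proof. exact: det1. Qed.

Theorem mainTheorem12 (p : nat) (p_prime : prime p)
  (Zp : comUnitRingType) (hZp : is_padic_integers p Zp)
  (S R : comUnitRingType) (hS : is_local S) (hR : is_local R)
  (IS : pred S) (IR : pred R)
  (hIS : is_ideal IS) (hIR : is_ideal IR)
  (fIS : finite_pred IS) (fIR : finite_pred IR)
  (piS : {rmorphism S -> Zp}) (piR : {rmorphism R -> Zp})
  (hpiS : quotient_map piS IS) (hpiR : quotient_map piR IR)
  (phi : {rmorphism S -> R}) (phi_surj : forall y : R, exists x : S, phi x = y)
  (hcompat : forall x : S, piR (phi x) = piS x)
  (fJ : finite_pred (kerp phi)) (nzJ : exists x : S, x != 0 /\ phi x = 0)
  (Phi : seq 'M[Zp]_2) (hPhi : finite_subgroup_GL2 Phi)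
  (hord : coprime (size Phi) p)
  (hJ : forall g, g \in Gamma (kerp phi) ->
          gen_group (comm_pow_gens p (Gamma IS)) g) :
  ~ exists rho : 'M[R]_2 -> 'M[S]_2, is_lift phi (tildeGamma piR Phi) rho.
Proof.
move=> [rho [hl hm]].
have [_ piS_ker] := hpiS.
have [_ hP1 _ _ _] := hPhi.
have [pi _] := hZp.
pose psi := (pi 0%N \o piS : {rmorphism S -> 'Z_(p ^ 1)}).
have psip : psi p%:R = 0.
  by rewrite rmorph_nat; exact: (pchar_Zp) (prime_gt1 p_prime).
have psiIS : forall a, a \in IS -> psi a = 0.
  by move=> a; rewrite -piS_ker => /eqP ha; rewrite /psi /= ha rmorph0.
have Jsub : forall a, phi a = 0 -> a \in IS.
  by move=> a h; rewrite -piS_ker -hcompat h rmorph0.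
have [s hs] := fJ.
pose js := filter (kerp phi) s.
have jsJ : forall x, x \in js -> phi x = 0.
  by move=> x; rewrite mem_filter => /andP[/eqP].
have Jjs : forall x, phi x = 0 -> x \in js.
  move=> x h; rewrite mem_filter; have hx : x \in kerp phi by rewrite unfold_in /kerp h.
  by rewrite (hs _ hx) andbT /kerp h.
pose n := size js.
pose K := fun x : S => exists c : 'I_n -> S, (forall k, psi (c k) = 0) /\ x = \sum_k c k * js`_k.
have K0 : K 0 by exists (fun _ => 0); split => [k|]; rewrite ?rmorph0 // big1 // => k _; rewrite mul0r.
have KD : forall x y, K x -> K y -> K (x + y).
  move=> x y [c [hc ->]] [d [hd ->]]; exists (fun k => c k + d k); split.
    by move=> k; rewrite rmorphD hc hd addr0.
  by rewrite -big_split; apply: (eq_bigr) => k _; rewrite mulrDl.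
have KM : forall a x, K x -> K (a * x).
  move=> a x [c [hc ->]]; exists (fun k => a * c k); split.
    by move=> k; rewrite rmorphM hc mulr0.
  by rewrite mulr_sumr; apply: (eq_bigr) => k _; rewrite mulrA.
have Kb : forall a b, psi a = 0 -> phi b = 0 -> K (a * b).
  move=> a b ha hb; have bj := Jjs _ hb.
  have ik : (index b js < n)%N by rewrite index_mem.
  pose k := Ordinal ik.
  exists (fun i => if i == k then a else 0); split.
    by move=> i; case: ifP; rewrite ?rmorph0.
  rewrite (bigD1 k) //= eqxx big1 ?addr0 ?nth_index // => i /negbTE ->.
  by rewrite mul0r.
have [x [xJ xK]] : exists x, phi x = 0 /\ ~ K x.
  apply: (NNPP) => H.
  have H' : forall x, phi x = 0 -> K x.
    by move=> x hx; apply: (NNPP) => nK; apply: (H); exists x.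
  have cfun : forall i : 'I_n, {c : 'I_n -> S | (forall k, psi (c k) = 0) /\ js`_i = \sum_k c k * js`_k}.
    by move=> i; apply: (constructive_indefinite_description); apply: (H'); apply: (jsJ); apply: (mem_nth).
  pose A := \matrix_(i, k) sval (cfun i) k : 'M[S]_n.
  pose v := \col_i js`_i : 'cV[S]_n.
  have Av : A *m v = v.
    apply/matrixP => i j; rewrite !mxE (proj2 (svalP (cfun i))).
    by apply: (eq_bigr) => k _; rewrite !mxE.
  have h0 : (1%:M - A) *m v = 0 by rewrite mulmxBl mul1mx Av subrr.
  have hd : (\det (1%:M - A)) *: v = 0.
    by rewrite -mul_scalar_mx -mul_adj_mx -mulmxA h0 mulmx0.
  have ud : \det (1%:M - A) \is a GRing.unit.
    apply: (@unit_of_morph _ _ psi hS).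
    rewrite -det_map_mx map_mxB map_mx1 (_ : map_mx psi A = 0) ?subr0 ?det1 //.
    by apply/matrixP => i k; rewrite !mxE; exact: (proj1 (svalP (cfun i))).
  have allz : forall i : 'I_n, js`_i = 0.
    move=> i; have := congr1 (fun M : 'cV[S]_n => M i 0) hd; rewrite !mxE.
    by move/(congr1 (fun t => (\det (1%:M - A))^-1 * t)); rewrite mulKr // mulr0.
  have [y [ny hy]] := nzJ; have yj := Jjs _ hy.
  have ik : (index y js < n)%N by rewrite index_mem.
  have := allz (Ordinal ik); rewrite /= nth_index // => y0.
  by rewrite y0 eqxx in ny.
pose GS := fun w : 'M[S]_2 => map_mx piS w = 1.
pose h := fun w : 'M[S]_2 => rho (map_mx phi w).
pose f := fun w : 'M[S]_2 => w * (h w)^-1 - 1.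
pose mxK := fun M : 'M[S]_2 => forall i j, K (M i j).
pose mxJ := fun M : 'M[S]_2 => forall i j, phi (M i j) = 0.
pose mxI := fun M : 'M[S]_2 => forall i j, M i j \in IS.
have pc : forall w : 'M[S]_2, map_mx piR (map_mx phi w) = map_mx piS w.
  by move=> w; apply/matrixP => i j; rewrite !mxE hcompat.
have GSu : forall w, GS w -> w \is a GRing.unit.
  move=> w hw; rewrite unitmxE; apply: (@unit_of_morph _ _ piS hS).
  by rewrite -det_map_mx hw det1'.
have GSM : forall a b, GS a -> GS b -> GS (a * b).
  by move=> a b ha hb; rewrite /GS mapM2 ha hb mulr1.
have GSV : forall a, GS a -> GS a^-1.
  by move=> a ha; rewrite /GS mapinv2 ?GSu // ha invr1.
have GS1 : GS 1 by exact: (map1').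
have unitphi : forall w, GS w -> map_mx phi w \is a GRing.unit.
  by move=> w hw; rewrite unitmxE det_map_mx rmorph_unit // -unitmxE GSu.
have TGin : forall w, GS w -> map_mx phi w \in tildeGamma piR Phi.
  by move=> w hw; rewrite unfold_in /tildeGamma unitphi //= pc hw.
have hprop : forall w, GS w ->
    [/\ h w \is a GRing.unit, map_mx phi (h w) = map_mx phi w & GS (h w)].
  move=> w hw; have [u e] := hl _ (TGin _ hw); split => //.
  by rewrite /GS -pc /h e pc.
have m1 : map_mx phi (1 : 'M[S]_2) = 1 by exact: (map1').
have T1 : (1 : 'M[R]_2) \in tildeGamma piR Phi by rewrite -m1; exact: (TGin).
have rho1 : rho 1 = 1.
  have [u _] := hl _ T1; have e := hm _ _ T1 T1; rewrite mulr1 in e.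
  by apply: (mulrI u); rewrite mulr1 -e.
have h1 : h 1 = 1 by rewrite /h m1 rho1.
have hM : forall a b, GS a -> GS b -> h (a * b) = h a * h b.
  by move=> a b ha hb; rewrite /h mapM2; apply: (hm); apply: (TGin).
have f1 : f 1 = 0 by rewrite /f h1 invr1 mulr1 subrr.
have mxGS : forall w, GS w -> mxI (w - 1).
  move=> w hw i j; rewrite -piS_ker.
  have : map_mx piS (w - 1) = 0 by rewrite map_mxB hw map1' subrr.
  by move/(congr1 (fun M : 'M[Zp]_2 => M i j)); rewrite !mxE => ->.
have fJ' : forall w, GS w -> mxJ (f w).
  move=> w hw i j; have [u e _] := hprop _ hw.
  have : map_mx phi (f w) = 0.
    by rewrite /f map_mxB mapM2 mapinv2 // e mulrV ?unitphi // map1' subrr.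
  by move/(congr1 (fun M : 'M[R]_2 => M i j)); rewrite !mxE.
have mxKD : forall A B, mxK A -> mxK B -> mxK (A + B).
  by move=> A B hA hB i j; rewrite mxE; apply: (KD).
have mxKN : forall A, mxK A -> mxK (- A).
  by move=> A hA i j; rewrite mxE -mulN1r; apply: (KM).
have mxK0 : mxK 0 by move=> i j; rewrite mxE.
have mxKl : forall A B, mxK A -> mxK (A * B).
  move=> A B hA; apply: (@mx_mul_pred S K (fun _ => True) K K0 KD) => //.
  by move=> a b ha _; rewrite mulrC; apply: (KM).
have mxKr : forall A B, mxK B -> mxK (A * B).
  move=> A B hB; apply: (@mx_mul_pred S (fun _ => True) K K K0 KD) => //.
  by move=> a b _ hb; apply: (KM).
have mxIJ : forall C A, mxI C -> mxJ A -> mxK (C * A).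
  move=> C A hC hA; apply: (@mx_mul_pred S (fun a => a \in IS) (fun b => phi b = 0) K K0 KD) => //.
  by move=> a b ha hb; apply: (Kb) => //; apply: (psiIS).
have mxJI : forall C A, mxI C -> mxJ A -> mxK (A * C).
  move=> C A hC hA; apply: (@mx_mul_pred S (fun b => phi b = 0) (fun a => a \in IS) K K0 KD) => //.
  by move=> a b ha hb; rewrite mulrC; apply: (Kb) => //; apply: (psiIS).
have mxJJ : forall A B, mxJ A -> mxJ B -> mxK (A * B).
  move=> A B hA hB; apply: (@mx_mul_pred S (fun b => phi b = 0) (fun b => phi b = 0) K K0 KD) => //.
  by move=> a b ha hb; apply: (Kb) => //; apply: (psiIS); apply: (Jsub).
have mxJl : forall A B, mxJ A -> mxJ (A * B).
  move=> A B hA; apply: (@mx_mul_pred S (fun b => phi b = 0) (fun _ => True) (fun b => phi b = 0)) => //.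
  - by rewrite rmorph0.
  - by move=> a b ha hb; rewrite rmorphD ha hb addr0.
  - by move=> a b ha _; rewrite rmorphM ha mul0r.
have mxJr : forall A B, mxJ B -> mxJ (A * B).
  move=> A B hB; apply: (@mx_mul_pred S (fun _ => True) (fun b => phi b = 0) (fun b => phi b = 0)) => //.
  - by rewrite rmorph0.
  - by move=> a b ha hb; rewrite rmorphD ha hb addr0.
  - by move=> a b _ hb; rewrite rmorphM hb mulr0.
have hom : forall w1 w2, GS w1 -> GS w2 -> mxK (f (w1 * w2) - f w1 - f w2).
  move=> w1 w2 g1 g2.
  have [u1 _ gh1] := hprop _ g1; have [u2 _ gh2] := hprop _ g2.
  have e1 : w1 * (h w1)^-1 = 1 + f w1 by rewrite /f addrC subrK.
  have e2 : w2 * (h w2)^-1 = 1 + f w2 by rewrite /f addrC subrK.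
  have ef : f (w1 * w2) = (1 + f w1) * (1 + h w1 * f w2 * (h w1)^-1) - 1.
    rewrite {1}/f hM // invrM // -e1; congr (_ - 1).
    move: (f w2) e2 => A2 e2.
    rewrite !mulrA -(mulrA w1 w2) e2 !mulrDr !mulr1 mulrDl; congr (_ + _).
    by rewrite !mulrA divrK.
  rewrite ef; move: (f w1) (f w2) (fJ' _ g1) (fJ' _ g2) => A1 A2 hA1 hA2.
  move: (h w1) u1 gh1 => H uH gH.
  rewrite mulrDl mul1r mulrDr mulr1 addid1.
  apply: (mxKD); last by apply: (mxJJ) => //; apply: (mxJl); apply: (mxJr).
  have [C eC hC] : exists2 C, H = 1 + C & mxI C.
    by exists (H - 1); [rewrite addrC subrK | apply: mxGS].
  have [D eD hD] : exists2 D, H^-1 = 1 + D & mxI D.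
    by exists (H^-1 - 1); [rewrite addrC subrK | apply: (mxGS); apply: GSV].
  rewrite eD eC mulrDl mul1r mulrDr mulr1 mulrDl addid2.
  apply: (mxKD); first apply: (mxKD).
  - exact: (mxJI).
  - exact: (mxIJ).
  - by apply: (mxKl); apply: (mxIJ).
pose eqv := fun A B : 'M[S]_2 => mxK (A - B).
have eqv_trans : forall A B C, eqv A B -> eqv B C -> eqv A C.
  move=> A B C hAB hBC; rewrite /eqv (_ : A - C = (A - B) + (B - C)).
    exact: (mxKD).
  by rewrite addrA subrK.
have eqv_add : forall A A' B B', eqv A A' -> eqv B B' -> eqv (A + B) (A' + B').
  move=> A A' B B' hA hB; rewrite /eqv opprD addrACA; exact: (mxKD).
have eqv_refl : forall A, eqv A A by move=> A; rewrite /eqv subrr.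
have homE : forall a b, GS a -> GS b -> eqv (f (a * b)) (f a + f b).
  by move=> a b ha hb; rewrite /eqv opprD addrA; apply: (hom).
have invE : forall a, GS a -> eqv (f a^-1) (- f a).
  move=> a ha; rewrite /eqv opprK.
  have := hom _ _ (GSV _ ha) ha; rewrite mulVr ?GSu // f1 sub0r -opprD.
  by move/(mxKN); rewrite opprK.
have powE : forall a k, GS a -> GS (a ^+ k) /\ eqv (f (a ^+ k)) (f a *+ k).
  move=> a k ha; elim: k => [|k [gk ek]].
    by rewrite expr0 mulr0n; split => //; rewrite f1.
  rewrite exprS mulrS; split; first exact: (GSM).
  apply: (eqv_trans _ _ _ (homE _ _ ha gk)); apply: (eqv_add) => //.
have gamGS : forall w, w \in Gamma IS -> GS w.
  move=> w /forallP Hw; apply/matrixP => i j; have /forallP/(_ j) := Hw i.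
  by rewrite -piS_ker !mxE rmorphB rmorph_nat subr_eq0 => /eqP ->.
have inv : forall w, gen_group (comm_pow_gens p (Gamma IS)) w -> GS w /\ mxK (f w).
  move=> w; elim => [x0 [[a [b [ga gb ->]]] | [a [ga ->]]] | | x1 x2 _ [G1 Q1] _ [G2 Q2] | x1 _ [G1 Q1]].
  - have {}ga := gamGS _ ga; have {}gb := gamGS _ gb.
    have gA := GSV _ ga; have gB := GSV _ gb.
    split; first by apply: (GSM) => //; apply: (GSM) => //; apply: (GSM).
    have E : eqv (f (a^-1 * b^-1 * a * b)) 0.
      apply: (eqv_trans _ _ _ (homE _ _ (GSM _ _ (GSM _ _ gA gB) ga) gb)).
      apply: (eqv_trans _ ((f a^-1 + f b^-1) + f a + f b)).
        apply: (eqv_add) => //; apply: (eqv_trans _ _ _ (homE _ _ (GSM _ _ gA gB) ga)).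
        by apply: (eqv_add) => //; apply: (homE).
      apply: (eqv_trans _ ((- f a + - f b) + f a + f b)).
        by apply: (eqv_add) => //; apply: (eqv_add) => //; apply: (eqv_add); apply: (invE).
      by rewrite -opprD -addrA addNr; apply: (eqv_refl).
    by move: E; rewrite /eqv subr0.
  - have {}ga := gamGS _ ga; have [gp ep] := powE a p ga.
    split => //; move: ep; rewrite /eqv => ep.
    have -> : f (a ^+ p) = (f (a ^+ p) - f a *+ p) + f a *+ p by rewrite subrK.
    apply: (mxKD) => // i j; rewrite mulmxnE -mulr_natl; apply: (Kb) => //.
    exact: (fJ' _ ga).
  - by split => //; rewrite f1.
  - split; first exact: (GSM).
    have := homE _ _ G1 G2; rewrite /eqv => E.
    rewrite (_ : f (x1 * x2) = (f (x1 * x2) - (f x1 + f x2)) + (f x1 + f x2)); last by rewrite subrK.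
    by apply: (mxKD) => //; apply: (mxKD).
  - split; first exact: (GSV).
    have := invE _ G1; rewrite /eqv opprK => E.
    rewrite (_ : f x1^-1 = (f x1^-1 + f x1) - f x1); last by rewrite addrK.
    by apply: (mxKD) => //; apply: (mxKN).
pose E := \matrix_(i, j) (if (i == 0) && (j == 0) then x else 0) : 'M[S]_2.
pose g := 1 + E.
have gE : g - 1 = E by rewrite /g addrAC subrr add0r.
have mapE : map_mx phi E = 0.
  by apply/matrixP => i j; rewrite !mxE; case: ifP; rewrite ?rmorph0.
have mapg : map_mx phi g = 1 by rewrite map_mxD map1' mapE addr0.
have gin : g \in Gamma (kerp phi).
  apply/forallP => i; apply/forallP => j; rewrite gE unfold_in /kerp.
  by have := congr1 (fun M : 'M[R]_2 => M i j) mapE; rewrite !mxE => ->.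
have [_ Qg] := inv _ (hJ _ gin).
have fg : f g = E by rewrite /f /h mapg rho1 invr1 mulr1 gE.
apply: xK; have := Qg 0 0; rewrite fg mxE.
by [].
Qed.
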